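(* For all integers $n\geq 0$ and $i\geq 1$, \begin{align*} \bar a_{2i}(4n+3)&\equiv 0 \pmod 4, & \bar a_{2i}(8n+6)&\equiv 0 \pmod 4,\\ \bar a_{2i}(8n+5)&\equiv 0 \pmod 4, & \bar a_{2i}(8n+7)&\equiv 0 \pmod 8. \end{align*}
   Context: For an integer $k\geq 1$ let $f_k:=\prod_{n\geq 1}(1-q^{kn})$. For an integer $c\geq1$, the generalized overcubic partition function $\bar a_c(n)$ is defined by the generating function $\sum_{n\geq 0}\bar a_c(n)q^n=\dfrac{f_4^{c-1}}{f_1^2f_2^{2c-3}}$. *)

(* Defs.v *)
From HB Require Import structures.
From mathcomp Require Import all_boot all_order all_algebra.
Set Implicit Arguments. Unset Strict Implicit. Unset Printing Implicit Defensive.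
Import GRing.Theory Num.Theory.
Local Open Scope ring_scope.

(* Truncation of f_k = prod_{m>=1} (1 - q^{k m}) : the finite product over
   1 <= m <= N, which agrees with f_k in all coefficients of degree <= N
   (for k >= 1). *)
Definition fpoly (k N : nat) : {poly int} :=
  \prod_(1 <= m < N.+1) (1 - 'X^(k * m)).

(* Truncation of 1/f_k = prod_{m>=1} 1/(1 - q^{k m})
                     = prod_{m>=1} sum_{j>=0} q^{k m j},
   agreeing with 1/f_k in all coefficients of degree <= N (for k >= 1). *)
Definition finv (k N : nat) : {poly int} :=
  \prod_(1 <= m < N.+1) \sum_(j < N.+1) 'X^(k * m * j).

(* Generalized overcubic partition function (c >= 1):
   sum_n abar c n q^n = f_4^{c-1} / (f_1^2 f_2^{2c-3}).
   The factor f_2^{-(2c-3)} is finv 2 ^ (2c-3) when 2c >= 3 and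
   fpoly 2 ^ (3-2c) when c = 1 (one of the two exponents is 0). *)
Definition abar (c n : nat) : int :=
  (fpoly 4 n ^+ (c - 1) * finv 1 n ^+ 2 *
   finv 2 n ^+ (2 * c - 3) * fpoly 2 n ^+ (3 - 2 * c))`_n.

(* Main.v *)
Require Import Defs.
From mathcomp Require Import all_boot all_order all_algebra.
From mathcomp Require Import ring zify.
Set Implicit Arguments. Unset Strict Implicit. Unset Printing Implicit Defensive.
Import GRing.Theory Num.Theory.
Local Open Scope ring_scope.


Definition cong (d : int) (L : nat) (p q : {poly int}) :=
  exists r s : {poly int}, p - q = d%:P * r + 'X^L * s.

Lemma cong_refl d L p : cong d L p p.
Proof. exists 0, 0; rewrite subrr; ring. Qed.

Lemma cong_sym d L p q : cong d L p q -> cong d L q p.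
Proof. move=> [r [s e]]; exists (-r), (-s). rewrite -opprB e; ring. Qed.

Lemma cong_trans d L p q t : cong d L p q -> cong d L q t -> cong d L p t.
Proof.
move=> [r [s e]] [r' [s' e']]; exists (r + r'), (s + s').
have -> : p - t = (p - q) + (q - t) by ring.
rewrite e e'; ring.
Qed.

Lemma cong_add d L p q p' q' : cong d L p p' -> cong d L q q' ->
  cong d L (p + q) (p' + q').
Proof.
move=> [r [s e]] [r' [s' e']]; exists (r + r'), (s + s').
have -> : p + q - (p' + q') = (p - p') + (q - q') by ring.
rewrite e e'; ring.
Qed.

Lemma cong_opp d L p q : cong d L p q -> cong d L (- p) (- q).
Proof. move=> [r [s e]]; exists (-r), (-s).
have -> : - p - - q = - (p - q) by ring. rewrite e; ring. Qed.

Lemma cong_mul d L p q p' q' : cong d L p p' -> cong d L q q' ->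
  cong d L (p * q) (p' * q').
Proof.
move=> [r [s e]] [r' [s' e']]; exists (r * q + p' * r'), (s * q + p' * s').
have -> : p * q - p' * q' = (p - p') * q + p' * (q - q') by ring.
rewrite e e'; ring.
Qed.

Lemma cong_exp d L p q n : cong d L p q -> cong d L (p ^+ n) (q ^+ n).
Proof.
move=> h; elim: n => [|n IH]; first exact: cong_refl.
by rewrite !exprS; apply: cong_mul.
Qed.

Lemma cong_eq d L p q : p = q -> cong d L p q.
Proof. by move=> ->; apply: cong_refl. Qed.

Lemma cong_dvd d d' L p q : (d %| d')%Z -> cong d' L p q -> cong d L p q.
Proof.
move=> /dvdzP [k ->] [r [s e]]; exists (k%:P * r), s.
rewrite e polyCM; ring.
Qed.

Lemma cong_le d L L' p q : (L' <= L)%N -> cong d L p q -> cong d L' p q.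
Proof.
move=> hL [r [s e]]; exists r, ('X^(L - L') * s).
by rewrite e mulrA -exprD subnKC.
Qed.

Lemma cong0 d L p q : cong 0 L p q -> cong d L p q.
Proof. move=> [r [s e]]; exists 0, s; rewrite e; ring. Qed.

Lemma cong_Xn d L k p : (L <= k)%N -> cong d L ('X^k * p) 0.
Proof. move=> h; exists 0, ('X^(k - L) * p).
by rewrite subr0 mulr0 add0r mulrA -exprD subnKC. Qed.

Lemma cong_dmul d L p : cong d L (d%:P * p) 0.
Proof. exists p, 0; rewrite subr0; ring. Qed.

Lemma cong_coef d L p q k : cong d L p q -> (k < L)%N -> (d %| p`_k - q`_k)%Z.
Proof.
move=> [r [s e]] hk.
rewrite -coefB e coefD coefCM coefXnM hk addr0.
by apply/dvdzP; exists r`_k; rewrite mulrC.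
Qed.

Lemma cong_prod d L (I : Type) (s : seq I) (F G : I -> {poly int}) :
  (forall i, cong d L (F i) (G i)) ->
  cong d L (\prod_(i <- s) F i) (\prod_(i <- s) G i).
Proof.
move=> h; elim: s => [|a s IH]; first by rewrite !big_nil; apply: cong_refl.
by rewrite !big_cons; apply: cong_mul.
Qed.

Lemma cong_sum d L (I : Type) (s : seq I) (F G : I -> {poly int}) :
  (forall i, cong d L (F i) (G i)) ->
  cong d L (\sum_(i <- s) F i) (\sum_(i <- s) G i).
Proof.
move=> h; elim: s => [|a s IH]; first by rewrite !big_nil; apply: cong_refl.
by rewrite !big_cons; apply: cong_add.
Qed.


Lemma geom (y : {poly int}) n : (1 - y) * \sum_(j < n) y ^+ j = 1 - y ^+ n.
Proof.
elim: n => [|n IH]; first by rewrite big_ord0 expr0; ring.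
rewrite big_ord_recr /= mulrDr IH exprS; ring.
Qed.

Fixpoint qfac (Q : {poly int}) (n : nat) : {poly int} :=
  if n is m.+1 then qfac Q m * (1 - Q ^+ m.+1) else 1.

Fixpoint qbin (Q : {poly int}) (n i : nat) : {poly int} :=
  match n, i with
  | 0, 0 => 1
  | 0, _.+1 => 0
  | _.+1, 0 => 1
  | m.+1, j.+1 => qbin Q m j.+1 + Q ^+ (m - j) * qbin Q m j
  end.

Fixpoint tri (i : nat) : nat := if i is j.+1 then (tri j + j)%N else 0%N.

Lemma tri2 i : (2 * tri i = i * (i - 1))%N.
Proof.
elim: i => [|i IH] //=; rewrite mulnDr IH subSS subn0.
case: i {IH} => [|i] //=; rewrite subSS subn0; nia.
Qed.

Lemma qbin_gt Q n i : (n < i)%N -> qbin Q n i = 0.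
Proof.
elim: n i => [|n IH] [|i] //= h.
by rewrite !IH ?mulr0 ?addr0 //; lia.
Qed.

Lemma qbin_fac Q n i : (i <= n)%N ->
  qbin Q n i * qfac Q i * qfac Q (n - i) = qfac Q n.
Proof.
elim: n i => [|n IH] [|i] //= h.
- by rewrite !mulr1.
- by rewrite !mul1r.
- rewrite subSS.
  case: (ltnP i n) => hin.
  + have e : (n - i = (n - i.+1).+1)%N by lia.
    have h1 := IH i.+1 hin. have h2 := IH i (ltnW hin).
    rewrite /= in h1.
    have eQ : Q ^+ (n - i) * Q ^+ i.+1 = Q ^+ n.+1.
      by rewrite -exprD; congr (_ ^+ _); lia.
    have -> : qfac Q n * (1 - Q ^+ n.+1) = qfac Q n * (1 - Q ^+ (n - i)) +
       Q ^+ (n - i) * (1 - Q ^+ i.+1) * qfac Q n.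
      rewrite -eQ; move: (Q ^+ (n - i)) (Q ^+ i.+1) => a b; ring.
    rewrite -{1}h1 -h2 e /=; ring.
  + have ei : i = n by lia.
    subst i.
    rewrite qbin_gt // subnn /= expr0 add0r mul1r mulr1.
    have h3 := IH n (leqnn n); rewrite subnn /= mulr1 in h3; by rewrite mulrA h3.
Qed.

Lemma qbin_n0 Q n : qbin Q n 0 = 1.
Proof. by case: n. Qed.

Lemma qbinom Q u v n :
  \prod_(k < n) (u + Q ^+ k * v) =
  \sum_(i < n.+1) qbin Q n i * Q ^+ tri i * u ^+ (n - i) * v ^+ i.
Proof.
elim: n => [|n IH]; first by rewrite big_ord0 big_ord1 /= !expr0 !mulr1.
rewrite big_ord_recr /= IH [RHS]big_ord_recl.
have -> : \sum_(i < n.+1) qbin Q n.+1 (bump 0 i) * Q ^+ tri (bump 0 i) *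
    u ^+ (n.+1 - bump 0 i) * v ^+ bump 0 i =
  \sum_(i < n.+1) qbin Q n i.+1 * Q ^+ tri i.+1 * u ^+ (n - i) * v ^+ i.+1 +
  \sum_(i < n.+1) (qbin Q n i * Q ^+ tri i * u ^+ (n - i) * v ^+ i) * (Q ^+ n * v).
  rewrite -big_split /=; apply: eq_bigr => i _.
  rewrite /bump /= add1n subSS /=.
  have hi : (i <= n)%N by case: i => /= i; lia.
  have -> : Q ^+ (tri i + i) = Q ^+ tri i * Q ^+ i by rewrite exprD.
  have -> : Q ^+ n = Q ^+ (n - i) * Q ^+ i by rewrite -exprD subnK.
  rewrite exprS; move: (Q ^+ tri i) (Q ^+ i) (Q ^+ (n - i)) (u ^+ (n - i)) (v ^+ i) => a b c d e.
  ring.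
have -> : \sum_(i < n.+1) qbin Q n i.+1 * Q ^+ tri i.+1 * u ^+ (n - i) * v ^+ i.+1
   = \sum_(i < n.+1) (qbin Q n i * Q ^+ tri i * u ^+ (n - i) * v ^+ i) * u
     - qbin Q n 0 * Q ^+ tri 0 * u ^+ (n - 0) * v ^+ 0 * u.
  rewrite [in RHS]big_ord_recl /= [in LHS]big_ord_recr /= qbin_gt // !mul0r addr0.
  set S1 := \sum_(i < n) _; set S2 := \sum_(i < n) _.
  have -> : S1 = S2.
    apply: eq_bigr => i _; rewrite /bump /= add1n !add0n.
    have hi : (i < n)%N by case: i.
    have -> : (n - i = (n - i.+1).+1)%N by lia.
    rewrite exprS; move: (u ^+ (n - i.+1)) => a; ring.
  ring.
rewrite -!big_distrl /= qbin_n0 !subn0 !expr0 !mulr1 !mul1r exprS.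
move: (\sum_(i < n.+1) _) => S; ring.
Qed.


Definition oddp (N : nat) : {poly int} := \prod_(k < N) (1 - 'X^(2 * k + 1)).
Definition ee (N i : nat) : nat := ((i - N) ^ 2 + (N - i) ^ 2)%N.

Lemma sum_double N : (\sum_(k < N) (2 * k) = 2 * tri N)%N.
Proof.
elim: N => [|N IH]; first by rewrite big_ord0.
by rewrite big_ord_recr /= IH; lia.
Qed.

Lemma exp_ident N i : (0 < N)%N -> (i <= 2 * N)%N ->
  (2 * tri i + (2 * N - 1) * (2 * N - i) = ee N i + (2 * tri N + (2 * N - 1) * N))%N.
Proof.
move=> hN hi; rewrite /ee !tri2 !expnS !expn0 !muln1.
case: (leqP i N) => h.
- have [j ->] : exists j, N = (i + j)%N by exists (N - i)%N; lia.
  have -> : (i - (i + j) = 0)%N by lia.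
  have -> : (i + j - i = j)%N by lia.
  have -> : (2 * (i + j) - i = i + 2 * j)%N by lia.
  case: i hN hi h => [|i] hN hi h.
  + nia.
  + rewrite -addn1 addnK; nia.
- have [j ej] : exists j, i = (N + j)%N by exists (i - N)%N; lia.
  subst i.
  have -> : (N + j - N = j)%N by lia.
  have -> : (N - (N + j) = 0)%N by lia.
  have -> : (2 * N - (N + j) = N - j)%N by lia.
  have hj : (j <= N)%N by lia.
  have [k ek] : exists k, N = (j + k)%N by exists (N - j)%N; lia.
  subst N.
  have -> : (j + k - j = k)%N by lia.
  have [t et] : exists t, (j + k = t.+1)%N by exists (j + k).-1%N; lia.
  have -> : (2 * (j + k) - 1 = 2 * t + 1)%N by lia.
  have -> : (j + k + j - 1 = t + j)%N by lia.
  have -> : (j + k - 1 = t)%N by lia.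
  rewrite et; nia.
Qed.

Lemma Xn_neq0 c : ('X^c : {poly int}) != 0.
Proof. by rewrite expf_neq0 // polyX_eq0. Qed.

Lemma oddp_sq N : oddp N ^+ 2 =
  \sum_(i < (2 * N).+1) (-1) ^+ (i + N) * 'X^(ee N i) * qbin ('X^2) (2 * N) i.
Proof.
case: N => [|M].
  by rewrite /oddp big_ord0 big_ord1 /= /ee /= expr1n !expr0 !mulr1.
set N := M.+1.
have q := qbinom ('X^2) ('X^(2 * M + 1)) (-1) (2 * N).
set c := (2 * tri N + (2 * N - 1) * N)%N.
have hL : \prod_(k < 2 * N) ('X^(2 * M + 1) + 'X^2 ^+ k * -1) =
    (-1) ^+ N * 'X^c * oddp N ^+ 2 :> {poly int}.
  have -> : (2 * N = N + N)%N by lia.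
  rewrite big_split_ord /=.
  have -> : \prod_(i < N) ('X^(2 * M + 1) + 'X^2 ^+ lshift N i * -1) =
      \prod_(i < N) ((-1) * 'X^(2 * i) * (1 - 'X^(2 * (M - i) + 1))) :> {poly int}.
    apply: eq_bigr => i _ /=.
    have hi : (i <= M)%N by case: i => /= i; rewrite /N; lia.
    rewrite -exprM.
    have -> : ('X^(2 * M + 1) = 'X^(2 * i) * 'X^(2 * (M - i) + 1) :> {poly int}).
      by rewrite -exprD; congr (_ ^+ _); lia.
    ring.
  have -> : \prod_(i < N) ('X^(2 * M + 1) + 'X^2 ^+ rshift N i * -1) =
      \prod_(i < N) ('X^(2 * M + 1) * (1 - 'X^(2 * i + 1))) :> {poly int}.
    apply: eq_bigr => i _ /=.
    rewrite -exprM.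
    have -> : ('X^(2 * (N + i)) = 'X^(2 * M + 1) * 'X^(2 * i + 1) :> {poly int}).
      by rewrite -exprD; congr (_ ^+ _); rewrite /N; lia.
    ring.
  rewrite !big_split /= !prodr_const !card_ord prodrXr sum_double.
  have -> : \prod_(i < N) (1 - 'X^(2 * (M - i) + 1)) = oddp N :> {poly int}.
    rewrite /oddp (reindex_inj rev_ord_inj) /=; apply: eq_bigr => i _ /=.
    have hi : (i <= M)%N by case: i => /= i; rewrite /N; lia.
    by rewrite /N subSS subKn.
  rewrite -/(oddp N) /c.
  have -> : (2 * N - 1 = 2 * M + 1)%N by rewrite /N; lia.
  rewrite [X in _ = _ * X * _]exprD [X in _ = _ * (_ * X) * _]exprM.
  move: ('X^(2 * tri N)) ('X^(2 * M + 1) ^+ N) (oddp N) ((-1) ^+ N) => a b d e.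
  ring.
have hR : \sum_(i < (2 * N).+1) qbin ('X^2) (2 * N) i * 'X^2 ^+ tri i *
      'X^(2 * M + 1) ^+ (2 * N - i) * (-1) ^+ i =
    'X^c * \sum_(i < (2 * N).+1) (-1) ^+ i * 'X^(ee N i) * qbin ('X^2) (2 * N) i
    :> {poly int}.
  rewrite big_distrr; apply: eq_bigr => i _.
  have hi : (i <= 2 * N)%N by case: i => /= i; lia.
  rewrite -!exprM -[qbin _ _ _ * _ * _]mulrA.
  have -> : ('X^(2 * tri i) * 'X^((2 * M + 1) * (2 * N - i)) =
       'X^c * 'X^(ee N i) :> {poly int}).
    rewrite -!exprD; congr (_ ^+ _).
    have -> : (2 * M + 1 = 2 * N - 1)%N by rewrite /N; lia.
    by rewrite exp_ident // addnC.
  rewrite -[RHS]/('X^c * ((-1) ^+ i * 'X^(ee N i) * qbin 'X^2 (2 * N) i)).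
  move: (qbin _ _ _) ('X^c) ('X^(ee N i)) ((-1) ^+ i : {poly int}) => a b d e.
  ring.
set S := \sum_(i < (2 * N).+1) (-1) ^+ i * 'X^(ee N i) * qbin ('X^2) (2 * N) i.
have h2 : 'X^c * ((-1) ^+ N * oddp N ^+ 2) = 'X^c * S :> {poly int}.
  rewrite -hR -q hL; move: ('X^c) ((-1) ^+ N : {poly int}) (oddp N) => a b d; ring.
have h3 := mulfI (Xn_neq0 c) h2.
transitivity ((-1) ^+ N * ((-1) ^+ N * oddp N ^+ 2) : {poly int}).
  by rewrite mulrA -expr2 sqrr_sign mul1r.
rewrite h3 /S big_distrr; apply: eq_bigr => i _ /=.
rewrite exprD; move: ((-1) ^+ N : {poly int}) ((-1) ^+ i : {poly int}) => a b; ring.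
Qed.


Lemma cong_1mX d L k : (L <= k)%N -> cong d L (1 - 'X^k) 1.
Proof.
move=> h; exists 0, (- 'X^(k - L)).
rewrite mulr0 add0r mulrN -exprD subnKC //; ring.
Qed.

Lemma cong_shift L e p q : cong 0 L p q -> cong 0 (L + e) ('X^e * p) ('X^e * q).
Proof.
move=> [r [s h]]; exists 0, s.
rewrite mulr0 add0r -mulrBr h mul0r add0r mulrA -exprD addnC //.
Qed.

Lemma qfac_ext c a t L : (L <= c * a.+1)%N ->
  cong 0 L (qfac ('X^c) (a + t)) (qfac ('X^c) a).
Proof.
move=> hL; elim: t => [|t IH]; first by rewrite addn0; apply: cong_refl.
rewrite addnS /=; apply: cong_trans IH.
rewrite -[X in cong _ _ _ X]mulr1; apply: cong_mul; first exact: cong_refl.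
rewrite -exprM; apply: cong_1mX.
apply: leq_trans hL _; rewrite leq_mul2l; apply/orP; right; lia.
Qed.

Lemma qfac_ext' c a M L : (a <= M)%N -> (L <= c * a.+1)%N ->
  cong 0 L (qfac ('X^c) M) (qfac ('X^c) a).
Proof. by move=> h hL; rewrite -(subnKC h); apply: qfac_ext. Qed.

Lemma qfac_inv c a L : (0 < c)%N -> exists g, cong 0 L (qfac ('X^c) a * g) 1.
Proof.
move=> hc; elim: a => [|a [g IH]]; first by exists 1; rewrite /= mulr1; apply: cong_refl.
exists (g * \sum_(j < L) ('X^(c * a.+1)) ^+ j).
have -> : qfac ('X^c) a.+1 * (g * \sum_(j < L) 'X^(c * a.+1) ^+ j) =
   (qfac ('X^c) a * g) * ((1 - 'X^(c * a.+1)) * \sum_(j < L) 'X^(c * a.+1) ^+ j).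
  by rewrite /= -exprM; ring.
rewrite geom -[1 in X in cong _ _ _ X]mulr1; apply: cong_mul => //.
rewrite -exprM; apply: cong_1mX; nia.
Qed.

Lemma qbin_approx N i : (i <= 2 * N)%N ->
  cong 0 N.+1 ('X^(ee N i) * (qbin ('X^2) (2 * N) i * qfac ('X^2) N)) ('X^(ee N i)).
Proof.
move=> hi.
set a := if (i <= N)%N then i else (2 * N - i)%N.
have ha1 : (a <= i)%N by rewrite /a; case: ifP => hh; lia.
have ha2 : (a <= 2 * N - i)%N by rewrite /a; case: ifP => hh; lia.
have ha3 : (a <= N)%N by rewrite /a; case: ifP => hh; lia.
have ha4 : (a <= 2 * N)%N by lia.
set L := (2 * a.+1)%N.
have hL : (L <= 2 * a.+1)%N by [].
set G := qfac ('X^2) a.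
have [g hg] := qfac_inv a L (isT : (0 < 2)%N).
have e := qbin_fac ('X^2) hi.
have h1 : cong 0 L (qbin ('X^2) (2 * N) i * G * G) G.
  apply: cong_trans (qfac_ext' ha4 hL).
  rewrite -e; apply: cong_mul; last exact: cong_sym (qfac_ext' ha2 hL).
  apply: cong_mul; first exact: cong_refl.
  exact: cong_sym (qfac_ext' ha1 hL).
have h2 : cong 0 L (qbin ('X^2) (2 * N) i * qfac ('X^2) N) 1.
  apply: (@cong_trans _ _ _ (qbin ('X^2) (2 * N) i * G * (G * g))).
    rewrite -[X in cong _ _ X _]mulr1; apply: cong_mul.
      apply: cong_mul; first exact: cong_refl.
      exact: qfac_ext' ha3 hL.
    exact: cong_sym hg.
  rewrite mulrA; apply: cong_trans hg.
  by apply: cong_mul => //; apply: cong_refl.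
have h3 := cong_shift (ee N i) h2.
rewrite -[X in cong _ _ _ X]mulr1.
apply: cong_le h3.
rewrite /L /a /ee; case: ifP => h.
- have -> : (i - N = 0)%N by lia.
  have [j ej] : exists j, N = (i + j)%N by exists (N - i)%N; lia.
  subst N; have -> : (i + j - i = j)%N by lia.
  rewrite !expnS expn0 !muln1; nia.
- have -> : (N - i = 0)%N by lia.
  have [j ej] : exists j, i = (N + j)%N by exists (i - N)%N; lia.
  subst i; have -> : (N + j - N = j)%N by lia.
  have -> : (2 * N - (N + j) = N - j)%N by lia.
  have [k ek] : exists k, N = (j + k)%N by exists (N - j)%N; lia.
  subst N; have -> : (j + k - j = k)%N by lia.
  rewrite !expnS expn0 !muln1; nia.
Qed.

Lemma qfac_split N : qfac 'X (2 * N) = oddp N * qfac ('X^2) N.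
Proof.
elim: N => [|N IH]; first by rewrite /oddp big_ord0 /= mulr1.
have -> : (2 * N.+1 = (2 * N).+2)%N by lia.
rewrite /= IH /oddp big_ord_recr /= -exprM.
have -> : (2 * N.+1 = (2 * N).+2)%N by lia.
rewrite addn1.
move: (\prod_(i < N) _) (qfac _ N) ('X^((2 * N).+1)) ('X^((2 * N).+2)) => a b x y; ring.
Qed.

Definition th (N : nat) : {poly int} :=
  \sum_(i < (2 * N).+1) (-1) ^+ (i + N) * 'X^(ee N i).

Lemma gauss N : cong 0 N.+1 (qfac 'X N ^+ 2) (qfac ('X^2) N * th N).
Proof.
apply: (@cong_trans _ _ _ (qfac 'X (2 * N) ^+ 2)).
  apply: cong_exp; apply: cong_sym.
  have := @qfac_ext' 1 N (2 * N) N.+1; rewrite expr1; apply; lia.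
rewrite qfac_split exprMn oddp_sq expr2 mulrA big_distrl /=.
rewrite [X in cong _ _ _ X]mulrC; apply: cong_mul; last exact: cong_refl.
rewrite /th; apply: cong_sum => i.
have hi : (i <= 2 * N)%N by case: i => /= i; lia.
rewrite -!mulrA; apply: cong_mul; first exact: cong_refl.
exact: qbin_approx hi.
Qed.


Lemma fpoly_qfac k N : fpoly k N = qfac ('X^k) N.
Proof.
rewrite /fpoly; elim: N => [|N IH]; first by rewrite big_geq.
by rewrite big_nat_recr //= IH exprM.
Qed.

Lemma cong_prod1 d L (F : nat -> {poly int}) N :
  (forall m, (1 <= m)%N -> cong d L (F m) 1) ->
  cong d L (\prod_(1 <= m < N.+1) F m) 1.
Proof.
move=> h; elim: N => [|N IH]; first by rewrite big_geq //; apply: cong_refl.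
rewrite big_nat_recr //= -[X in cong _ _ _ X]mulr1; apply: cong_mul => //.
exact: h.
Qed.

Lemma finv_inv k N : (0 < k)%N -> cong 0 N.+1 (fpoly k N * Defs.finv k N) 1.
Proof.
move=> hk; rewrite /fpoly /Defs.finv -big_split /=; apply: cong_prod1 => m hm.
have -> : \sum_(j < N.+1) 'X^(k * m * j) = \sum_(j < N.+1) ('X^(k * m)) ^+ j
   :> {poly int} by apply: eq_bigr => j _; rewrite exprM.
rewrite geom -exprM; apply: cong_1mX; nia.
Qed.

Lemma cong_comp2 L p q : cong 0 L p q -> cong 0 L (p \Po 'X^2) (q \Po 'X^2).
Proof.
move=> [r [s h]]; exists 0, ('X^L * (s \Po 'X^2)).
have := congr1 (fun u => u \Po 'X^2) h; rewrite /= rmorphB /= => ->.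
rewrite rmorphD rmorphM /= comp_polyC mul0r add0r mulr0 add0r rmorphM /=.
rewrite comp_Xn_poly -exprM mulrA -exprD; congr (_ ^+ _ * _); lia.
Qed.

Lemma qfac_comp Q R N : qfac Q N \Po R = qfac (Q \Po R) N.
Proof.
elim: N => [|N IH] /=; first by rewrite comp_polyC.
by rewrite rmorphM /= IH rmorphB /= comp_polyC rmorphXn.
Qed.

Lemma gauss2 N : cong 0 N.+1 (qfac ('X^2) N ^+ 2) (qfac ('X^4) N * (th N \Po 'X^2)).
Proof.
have h := cong_comp2 (gauss N).
rewrite rmorphXn rmorphM /= !qfac_comp comp_polyX comp_Xn_poly -exprM in h.
exact: h.
Qed.

Definition T (N : nat) : {poly int} := \sum_(i < N) (-1) ^+ (i + N) * 'X^(ee N i).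

Lemma th_T N : th N = 1 + 2 * T N.
Proof.
rewrite /th.
have -> : ((2 * N).+1 = N + N.+1)%N by lia.
rewrite big_split_ord /= big_ord_recl /=.
have -> : (-1) ^+ (N + 0 + N) * 'X^(ee N (N + 0)) = 1 :> {poly int}.
  rewrite addn0 /ee subnn /= expr0 mulr1 exprD -expr2; exact: sqrr_sign.
have -> : \sum_(i < N) (-1) ^+ (N + bump 0 i + N) * 'X^(ee N (N + bump 0 i)) =
    T N :> {poly int}.
  rewrite /T (reindex_inj rev_ord_inj) /=; apply: eq_bigr => i _ /=.
  have hi : (i < N)%N by case: i.
  rewrite /bump /= add1n subnSK //.
  have -> : ee N (N + (N - i)) = ee N i.
    rewrite /ee; have -> : (N + (N - i) - N = N - i)%N by lia.
    have -> : (N - (N + (N - i)) = 0)%N by lia.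
    have -> : (i - N = 0)%N by lia.
    by rewrite addnC.
  have -> : (N + (N - i) + N = (i + N) + (N - i) * 2)%N by lia.
  by rewrite exprD exprM sqrr_sign mulr1.
rewrite -/(T N); ring.
Qed.

Definition Apoly (j N : nat) : {poly int} :=
  fpoly 4 N ^+ (2 * j + 1) * Defs.finv 1 N ^+ 2 * Defs.finv 2 N ^+ (4 * j + 1).

Lemma main0 j N : cong 0 N.+1 (Apoly j N * th N * (th N \Po 'X^2) ^+ (2 * j + 1)) 1.
Proof.
have i1 := finv_inv N (isT : (0 < 1)%N).
have i2 := finv_inv N (isT : (0 < 2)%N).
have i4 := finv_inv N (isT : (0 < 4)%N).
rewrite !fpoly_qfac expr1 in i1 i2 i4.
rewrite /Apoly !fpoly_qfac.
set f1 := qfac 'X N in i1 *; set f2 := qfac ('X^2) N in i2 *.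
set f4 := qfac ('X^4) N in i4 *.
set g1 := Defs.finv 1 N in i1 *; set g2 := Defs.finv 2 N in i2 *.
set g4 := Defs.finv 4 N in i4 *.
have hP1 : cong 0 N.+1 (th N) (f1 ^+ 2 * g2).
  apply: (@cong_trans _ _ _ (th N * (f2 * g2))).
    rewrite -[X in cong _ _ X _]mulr1; apply: cong_mul; first exact: cong_refl.
    exact: cong_sym i2.
  rewrite mulrA; apply: cong_mul; last exact: cong_refl.
  rewrite mulrC; apply: cong_sym; exact: gauss.
have hP2 : cong 0 N.+1 (th N \Po 'X^2) (f2 ^+ 2 * g4).
  apply: (@cong_trans _ _ _ ((th N \Po 'X^2) * (f4 * g4))).
    rewrite -[X in cong _ _ X _]mulr1; apply: cong_mul; first exact: cong_refl.
    exact: cong_sym i4.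
  rewrite mulrA; apply: cong_mul; last exact: cong_refl.
  rewrite mulrC; apply: cong_sym; exact: gauss2.
apply: (@cong_trans _ _ _ (f4 ^+ (2 * j + 1) * g1 ^+ 2 * g2 ^+ (4 * j + 1) *
   (f1 ^+ 2 * g2) * (f2 ^+ 2 * g4) ^+ (2 * j + 1))).
  apply: cong_mul; last exact: cong_exp.
  by apply: cong_mul => //; apply: cong_refl.
have -> : f4 ^+ (2 * j + 1) * g1 ^+ 2 * g2 ^+ (4 * j + 1) *
   (f1 ^+ 2 * g2) * (f2 ^+ 2 * g4) ^+ (2 * j + 1) =
   (f4 * g4) ^+ (2 * j + 1) * (f1 * g1) ^+ 2 * (f2 * g2) ^+ (2 * (2 * j + 1)).
  have -> : (2 * (2 * j + 1) = 2 * j + 1 + (2 * j + 1))%N by lia.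
  have -> : (4 * j + 1 = 2 * j + 1 + 2 * j)%N by lia.
  rewrite !exprMn !exprD !expr1.
  repeat match goal with |- context [?x ^+ (2 * j)] => generalize (x ^+ (2 * j)); intro end.
  ring.
apply: (@cong_trans _ _ _ (1 * 1 * 1)); last by rewrite !mulr1; apply: cong_refl.
apply: cong_mul; first apply: cong_mul.
- by have := cong_exp (2 * j + 1) i4; rewrite expr1n.
- by have := cong_exp 2 i1; rewrite expr1n.
- by have := cong_exp (2 * (2 * j + 1)) i2; rewrite expr1n.
Qed.


Lemma cong_wit (k : nat) L p q r : p - q = k%:R * r -> cong k%:R L p q.
Proof. by move=> h; exists r, 0; rewrite h polyC_natr mulr0 addr0. Qed.

Lemma pow14 L b j : cong 8 L ((1 + 4 * b) ^+ j) (1 + 4 * j%:R * b).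
Proof.
elim: j => [|j IH]; first by apply: cong_eq; rewrite expr0 mulr0 mul0r addr0.
rewrite exprS mulrC; apply: (@cong_trans _ _ _ ((1 + 4 * j%:R * b) * (1 + 4 * b))).
  by apply: cong_mul => //; apply: cong_refl.
apply: (@cong_wit 8 _ _ _ (2 * j%:R * b ^+ 2)).
rewrite -addn1 natrD; ring.
Qed.

Lemma int_even (c : int) : exists k : int, c ^+ 2 - c = 2 * k.
Proof.
have e := divz_eq c 2.
set q := (c %/ 2)%Z in e *; set b := (c %% 2)%Z in e *.
have hb0 : (0 <= b) by rewrite /b modz_ge0.
have hb1 : (b < 2) by rewrite /b ltz_mod.
exists (2 * q ^+ 2 + 2 * q * b - q).
have : b = 0 \/ b = 1 by lia.
by case=> hb; rewrite e hb; ring.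
Qed.

Lemma frob (p : {poly int}) : exists r, p ^+ 2 - (p \Po 'X^2) = 2 * r.
Proof.
elim/poly_ind: p => [|p c [r IH]].
  by exists 0; rewrite expr0n /= comp_polyC subr0 mulr0.
have [k hk] := int_even c.
exists (r * 'X^2 + c%:P * p * 'X + k%:P).
rewrite comp_poly_MXaddC.
have -> : (p * 'X + c%:P) ^+ 2 - ((p \Po 'X^2) * 'X^2 + c%:P) =
   (p ^+ 2 - (p \Po 'X^2)) * 'X^2 + 2 * c%:P * p * 'X + (c ^+ 2 - c)%:P.
  rewrite rmorphB rmorphXn /=; ring.
rewrite IH hk rmorphM /= polyC_natr; ring.
Qed.

Definition bpoly (t2 : {poly int}) : {poly int} :=
  (- t2 + 2 * t2 ^+ 2) + (- t2 + 2 * t2 ^+ 2) ^+ 2.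

Definition Rpoly (t t2 : {poly int}) (j : nat) : {poly int} :=
  1 - 2 * t + 4 * t ^+ 2 - 2 * t2 + 4 * t2 ^+ 2 + 4 * t * t2 + 4 * j%:R * bpoly t2.

Lemma mod8 (A t t2 : {poly int}) j L :
  cong 0 L (A * (1 + 2 * t) * (1 + 2 * t2) ^+ (2 * j + 1)) 1 ->
  cong 8 L A (Rpoly t t2 j).
Proof.
move=> h; have h8 := cong0 8 h.
set a := - t2 + 2 * t2 ^+ 2.
set U := 1 - 2 * t + 4 * t ^+ 2.
set W := 1 + 2 * a.
have hU : cong 8 L ((1 + 2 * t) * U) 1.
  by apply: (@cong_wit 8 _ _ _ (t ^+ 3)); rewrite /U; ring.
have hW : cong 8 L ((1 + 2 * t2) * W) 1.
  by apply: (@cong_wit 8 _ _ _ (t2 ^+ 3)); rewrite /W /a; ring.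
have s1 : cong 8 L A (A * ((1 + 2 * t) * U) * ((1 + 2 * t2) * W) ^+ (2 * j + 1)).
  have hWe := cong_exp (2 * j + 1) hW; rewrite expr1n in hWe.
  apply: cong_sym; apply: (@cong_trans _ _ _ (A * 1 * 1)); last by apply: cong_eq; ring.
  apply: cong_mul => //.
  by apply: cong_mul => //; apply: cong_refl.
apply: (cong_trans s1).
rewrite exprMn.
have -> : A * ((1 + 2 * t) * U) * ((1 + 2 * t2) ^+ (2 * j + 1) * W ^+ (2 * j + 1)) =
   (A * (1 + 2 * t) * (1 + 2 * t2) ^+ (2 * j + 1)) * (U * W ^+ (2 * j + 1)).
  move: ((1 + 2 * t2) ^+ (2 * j + 1)) (W ^+ (2 * j + 1)) => x y; ring.
apply: (@cong_trans _ _ _ (1 * (U * (W * (1 + 4 * j%:R * (a + a ^+ 2)))))).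
  apply: cong_mul => //.
  apply: cong_mul; first exact: cong_refl.
  have -> : W ^+ (2 * j + 1) = W * (W ^+ 2) ^+ j.
    by rewrite -exprM -exprS; congr (_ ^+ _); lia.
  apply: cong_mul; first exact: cong_refl.
  have -> : W ^+ 2 = 1 + 4 * (a + a ^+ 2) by rewrite /W; ring.
  exact: pow14.
rewrite mul1r /Rpoly /bpoly -/a.
apply: (@cong_wit 8 _ _ _ (- t * t2 ^+ 2 - t ^+ 2 * t2 + 2 * t ^+ 2 * t2 ^+ 2 +
   j%:R * (a + a ^+ 2) * ((- t + 2 * t ^+ 2) + a + 2 * (- t + 2 * t ^+ 2) * a))).
rewrite /U /W /a; ring.
Qed.


Lemma sq8 x : [|| ((x ^ 2) %% 8 == 0)%N, ((x ^ 2) %% 8 == 1)%N | ((x ^ 2) %% 8 == 4)%N].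
Proof.
rewrite -modnXm; have : (x %% 8 < 8)%N by rewrite ltn_pmod.
move: (x %% 8)%N => r; by do 8 (case: r => [|r] //).
Qed.

Definition issq (k : nat) : bool := [exists x : 'I_k.+1, k == (x : nat) ^ 2]%N.

Lemma issqP k : issq k -> exists x, k = (x ^ 2)%N.
Proof. by move=> /existsP [x /eqP ->]; exists x. Qed.

Lemma T_coef N k : ~~ issq k -> (T N)`_k = 0.
Proof.
move=> hk; rewrite /T coef_sum big1 // => i _.
have hi : (i < N)%N by case: i.
have -> : ((-1) ^+ (i + N) : {poly int}) = ((-1) ^+ (i + N))%:P.
  by rewrite rmorphXn /= polyCN.
rewrite coefCM coefXn.
have -> : (k == ee N i) = false; last by rewrite mulr0.
apply/negbTE; apply: contra hk => /eqP ->.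
rewrite /ee; have -> : (i - N = 0)%N by lia.
have hlt : (N - i < (0 ^ 2 + (N - i) ^ 2).+1)%N.
  rewrite ltnS add0n expnS expn1; apply: leq_pmulr; lia.
by apply/existsP; exists (Ordinal hlt).
Qed.

Lemma comp2_odd (p : {poly int}) m : odd m -> (p \Po 'X^2)`_m = 0.
Proof. by move=> h; rewrite coef_comp_poly_Xn // dvdn2 h. Qed.

Lemma comp2_even (p : {poly int}) m : (p \Po 'X^2)`_(2 * m) = p`_m.
Proof. by rewrite coef_comp_poly_Xn // dvdn_mulr // mulKn. Qed.

Lemma TT2_coef N m : (forall x y, m <> x ^ 2 + 2 * y ^ 2)%N ->
  (T N * (T N \Po 'X^2))`_m = 0.
Proof.
move=> hm; rewrite coefM big1 // => k _.
case hk: (issq k); last by rewrite T_coef ?hk // mul0r.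
have [x ex] := issqP hk.
case ho: (odd (m - k)); first by rewrite comp2_odd // mulr0.
have eq : (m - k = 2 * (m - k)./2)%N.
  by have := odd_double_half (m - k); rewrite ho add0n -mul2n => ->.
rewrite eq comp2_even.
case hq: (issq (m - k)./2); last by rewrite (@T_coef N (m - k)./2) ?hq // mulr0.
have [y ey] := issqP hq.
exfalso; apply: (hm x y).
have hkm : (k <= m)%N by have := ltn_ord k; lia.
rewrite -ex -ey -eq; lia.
Qed.

Lemma coef_natM (k : nat) (p : {poly int}) m : ((k%:R : {poly int}) * p)`_m = k%:R * p`_m.
Proof. by rewrite -polyC_natr coefCM. Qed.

Lemma R_coef (t t2 : {poly int}) j m :
  (Rpoly t t2 j)`_m = (m == 0)%:R - 2 * t`_m + 4 * (t ^+ 2)`_m - 2 * t2`_m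
     + 4 * (t2 ^+ 2)`_m + 4 * (t * t2)`_m
     + 4 * j%:R * (bpoly t2)`_m.
Proof.
rewrite /Rpoly.
rewrite -(mulrA 4 t t2) -(natrM _ 4 j) !coefD !coefN coef1 !coef_natM.
by rewrite natrM /bpoly !coefD !coefN coef_natM.
Qed.

Lemma not_issq m : (forall x, m <> (x ^ 2)%N) -> ~~ issq m.
Proof. by move=> h; apply/negP => /issqP [x /h]. Qed.

Lemma sq8' x : ((x ^ 2) %% 8 = 0 \/ (x ^ 2) %% 8 = 1 \/ (x ^ 2) %% 8 = 4)%N.
Proof. by case/or3P: (sq8 x) => /eqP ->; auto. Qed.

Lemma abar_A j m : abar (2 * j.+1) m = (Apoly j m)`_m.
Proof.
rewrite /abar /Apoly.
have -> : (2 * j.+1 - 1 = 2 * j + 1)%N by lia.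
have -> : (2 * (2 * j.+1) - 3 = 4 * j + 1)%N by lia.
have -> : (3 - 2 * (2 * j.+1) = 0)%N by lia.
by rewrite expr0 mulr1.
Qed.

Lemma cong_main j m :
  cong 8 m.+1 (Apoly j m) (Rpoly (T m) (T m \Po 'X^2) j).
Proof.
apply: mod8.
have h := main0 j m.
have ec : th m \Po 'X^2 = 1 + 2 * (T m \Po 'X^2).
  by rewrite th_T rmorphD rmorphM /= rmorph1 rmorph_nat.
by rewrite ec th_T in h.
Qed.

Lemma coef_facts j m : exists w r : int,
  (Apoly j m)`_m = w * 8 + (m == 0)%:R - 2 * (T m)`_m + 4 * ((T m \Po 'X^2)`_m + 2 * r)
     - 2 * (T m \Po 'X^2)`_m + 4 * ((T m ^+ 2) \Po 'X^2)`_m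
     + 4 * (T m * (T m \Po 'X^2))`_m + 4 * j%:R * (bpoly (T m) \Po 'X^2)`_m.
Proof.
have h := cong_coef (cong_main j m) (ltnSn m).
have [w hw] := dvdzP h.
have [r hr] := frob (T m).
exists w, r`_m.
have e1 : (T m ^+ 2)`_m = (T m \Po 'X^2)`_m + 2 * r`_m.
  have := congr1 (fun p : {poly int} => p`_m) hr; rewrite /= coefB coef_natM => <-; ring.
have e2 : bpoly (T m \Po 'X^2) = bpoly (T m) \Po 'X^2.
  rewrite /bpoly !(rmorphD, rmorphN, rmorphM, rmorphXn, rmorph_nat, rmorph1) /=; ring.
rewrite R_coef e1 e2 -rmorphXn in hw.
rewrite -hw; ring.
Qed.

Lemma final8 j m : odd m -> (forall x, m <> (x ^ 2)%N) ->
  (forall x y, m <> x ^ 2 + 2 * y ^ 2)%N -> (8 %| (Apoly j m)`_m)%Z.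
Proof.
move=> ho hsq hxy.
have [w [r e]] := coef_facts j m.
rewrite e T_coef ?not_issq // !comp2_odd // TT2_coef //.
have -> : (m == 0)%N = false by case: m ho {e hsq hxy}.
apply/dvdzP; exists (w + r); rewrite (_ : false%:R = 0 :> int) //; ring.
Qed.

Lemma final4 j m : m != 0%N -> (forall x, m <> (x ^ 2)%N) ->
  (T m \Po 'X^2)`_m = 0 -> (4 %| (Apoly j m)`_m)%Z.
Proof.
move=> h0 hsq ht2.
have [w [r e]] := coef_facts j m.
rewrite e T_coef ?not_issq // ht2 (negbTE h0) (_ : false%:R = 0 :> int) //.
apply/dvdzP; exists (2 * w + 2 * r + (T m ^+ 2 \Po 'X^2)`_m +
  (T m * (T m \Po 'X^2))`_m + j%:R * (bpoly (T m) \Po 'X^2)`_m).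
ring.
Qed.

Local Close Scope ring_scope.

Theorem theorem1p5 (n i : nat) : (1 <= i)%N ->
  [/\ (4 %| abar (2 * i) (4 * n + 3))%Z,
      (4 %| abar (2 * i) (8 * n + 6))%Z,
      (4 %| abar (2 * i) (8 * n + 5))%Z &
      (8 %| abar (2 * i) (8 * n + 7))%Z].
Proof.
case: i => [//|j] _; rewrite !abar_A; split.
- apply: final4; first by rewrite addn3.
    by move=> x; move: (x ^ 2)%N (sq8' x) => z hz; lia.
  by apply: comp2_odd; rewrite oddD oddM.
- apply: final4; first by rewrite addnS.
    by move=> x; move: (x ^ 2)%N (sq8' x) => z hz; lia.
  have -> : (8 * n + 6 = 2 * (4 * n + 3))%N by lia.
  rewrite comp2_even T_coef // not_issq // => x.
  by move: (x ^ 2)%N (sq8' x) => z hz; lia.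
- apply: final4; first by rewrite addnS.
    by move=> x; move: (x ^ 2)%N (sq8' x) => z hz; lia.
  by apply: comp2_odd; rewrite oddD oddM.
- apply: final8; first by rewrite oddD oddM.
    by move=> x; move: (x ^ 2)%N (sq8' x) => z hz; lia.
  move=> x y; move: (x ^ 2)%N (sq8' x) (y ^ 2)%N (sq8' y) => z hz z' hz'; lia.
Qed.
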